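(* Let $0<\alpha<1$ and define, for real $\xi,\eta$ with $\eta\neq0$, $\xi-\eta\neq 0$, $\xi\ne 0$, $$m(\xi-\eta,\eta)=\frac{\xi(1+|\xi-\eta|^\alpha)(1+|\eta|^\alpha)}{2\left[\xi(1+|\eta|^\alpha)(|\xi-\eta|^\alpha-|\xi|^\alpha)-\eta(1+|\xi|^\alpha)(|\xi-\eta|^\alpha-|\eta|^\alpha)\right]}.$$ Then, with implicit constants depending only on $\alpha$, $$\frac{|\xi-\eta|}{|\eta|}+\frac{|\eta|}{|\xi-\eta|}\lesssim|m(\xi-\eta,\eta)|\lesssim\frac{|\xi-\eta|^{1-\alpha}}{|\eta|}+\frac{|\eta|^{1-\alpha}}{|\xi-\eta|}\quad \text{for } (\xi-\eta)^2+\eta^2\leq 1,$$ and $$\frac{|\xi-\eta|^{1-\alpha}}{|\eta|}+\frac{|\eta|^{1-\alpha}}{|\xi-\eta|}\lesssim|m(\xi-\eta,\eta)|\lesssim \frac{|\xi-\eta|}{|\eta|}+\frac{|\eta|}{|\xi-\eta|}\quad \text{for } (\xi-\eta)^2+\eta^2\geq 1.$$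
   Context: $f\lesssim g$ means $f\le Cg$ for a constant $C$ independent of the variables. The function $m$ is regarded as a function of the two variables $(\xi-\eta,\eta)$. *)

(* Defs.v *)
From Stdlib Require Import Reals.
Open Scope R_scope.

(* |x|^p for real p, used only for x <> 0. *)
Definition apow (x p : R) : R := Rpower (Rabs x) p.

(* The multiplier m(ξ-η, η), written as a function of (a, b) = (ξ-η, η),
   so ξ = a + b. Division is Stdlib's total Rdiv. *)
Definition m (al a b : R) : R :=
  let xi := a + b in
  (xi * (1 + apow a al) * (1 + apow b al)) /
  (2 * (xi * (1 + apow b al) * (apow a al - apow xi al)
        - b * (1 + apow xi al) * (apow a al - apow b al))).

(* Main.v *)
Require Import Defs.
From Stdlib Require Import Reals Lra.
Open Scope R_scope.

Definition r (al t : R) := Rpower t al.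

Lemma exp_le_mono x y : x <= y -> exp x <= exp y.
Proof. intros [H|H]; [left; apply exp_increasing; auto| subst; lra]. Qed.

Lemma ln_le0 t : 0 < t -> t <= 1 -> ln t <= 0.
Proof. intros H1 [H2|H2]. - rewrite <- ln_1. left. apply ln_increasing; lra. - subst; rewrite ln_1; lra. Qed.

Lemma r_pos al t : 0 < r al t.
Proof. unfold r, Rpower. apply exp_pos. Qed.

Lemma r_mul al s t : 0 < s -> 0 < t -> r al (s * t) = r al s * r al t.
Proof. intros. unfold r. rewrite Rpower_mult_distr; auto. Qed.

Lemma r_mono al s t : 0 <= al -> 0 < s -> s <= t -> r al s <= r al t.
Proof. intros. unfold r. apply Rle_Rpower_l; lra. Qed.

Lemma r_ge_id al t : 0 <= al <= 1 -> 0 < t -> t <= 1 -> t <= r al t.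
Proof. intros Ha Ht Ht1. unfold r, Rpower.
  rewrite <- (exp_ln t) at 1 by auto. apply exp_le_mono.
  pose proof (ln_le0 t Ht Ht1). nra. Qed.

Lemma r_le1 al t : 0 <= al -> 0 < t -> t <= 1 -> r al t <= 1.
Proof. intros Ha Ht Ht1. unfold r, Rpower. rewrite <- exp_0. apply exp_le_mono.
  pose proof (ln_le0 t Ht Ht1). nra. Qed.

Lemma r_le_id al t : 0 <= al <= 1 -> 1 <= t -> r al t <= t.
Proof. intros Ha Ht. unfold r. rewrite <- (Rpower_1 t) at 2 by lra.
  apply Rle_Rpower; [lra|]. lra. Qed.

Lemma r_half_lt1 al : 0 < al -> r al (1/2) < 1.
Proof. intros Ha. unfold r, Rpower.
  assert (ln (1/2) < 0). { rewrite <- ln_1. apply ln_increasing; lra. }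
  assert (H1: exp (al * ln (1/2)) < exp 0) by (apply exp_increasing; nra).
  rewrite exp_0 in H1. exact H1. Qed.

Lemma pow1m al t : 0 < t -> Rpower t (1 - al) = t / r al t.
Proof. intros Ht. unfold Rminus. rewrite Rpower_plus, Rpower_1, Rpower_Ropp by auto.
  unfold r. reflexivity. Qed.

Lemma r_ratio al u v : 0 <= al <= 1 -> 0 < u -> u <= v -> u * r al v <= v * r al u.
Proof. intros Ha Hu Huv.
  assert (Hv : 0 < v) by lra.
  replace u with (v * (u / v)) at 2 by (field; lra).
  rewrite r_mul; [| lra | apply Rdiv_lt_0_compat; lra].
  assert (u / v <= r al (u/v)). { apply r_ge_id; auto. apply Rdiv_lt_0_compat; lra.
    apply Rmult_le_reg_r with v; auto. unfold Rdiv. rewrite Rmult_assoc, Rinv_l; lra. }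
  pose proof (r_pos al v).
  replace (u * r al v) with (v * r al v * (u / v)) by (field; lra).
  assert (0 <= v * r al v) by nra. nra. Qed.

Lemma core al u v : 0 < al < 1 -> 0 < u -> u <= v ->
  let P := u + v in let p := r al u in let q := r al v in let s := r al P in
  let k := r al (1/2) in
  let E := u*(1+q)*(s-p) + v*(1+p)*(s-q) in
  (1 - k) * u * s * (1 + s) <= 2 * E /\ 2 * E <= 4 * u * s * (1 + s) /\
  p <= s /\ q <= s /\ s <= 2 * q /\ 1/2 <= k /\ k < 1.
Proof.
  intros Ha Hu Huv P p q s k E.
  assert (Hv : 0 < v) by lra. assert (HP : 0 < P) by (unfold P; lra).
  assert (Hk1 : 1/2 <= k) by (apply r_ge_id; lra).
  assert (Hk2 : k < 1) by (apply r_half_lt1; lra).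
  assert (Hp : 0 < p) by apply r_pos. assert (Hq : 0 < q) by apply r_pos.
  assert (Hs : 0 < s) by apply r_pos.
  assert (F1 : p <= k * s).
  { unfold p, k, s. rewrite Rmult_comm, <- r_mul by lra. apply r_mono; unfold P; lra. }
  assert (F2 : k * s <= q).
  { unfold q, k, s. rewrite Rmult_comm, <- r_mul by lra. apply r_mono; unfold P; lra. }
  assert (F3 : v * s <= P * q) by (apply r_ratio; unfold P; lra).
  assert (F4 : v * (s - q) <= u * s).
  { assert (H: (v * (s - q)) * P <= (u * s) * P).
    { assert (P - v = u) by (unfold P; ring).
      assert (v * (v * s) <= v * (P * q)) by (apply Rmult_le_compat_l; lra).
      assert (u * s * v <= u * s * P) by (apply Rmult_le_compat_l; [nra| unfold P; lra]).
      nra. }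
    apply Rmult_le_reg_r with P; auto. }
  assert (Hsp : (1 - k) * s <= s - p) by lra.
  assert (Hsq : 0 <= s - q).
  { assert (q <= s) by (unfold q, s; apply r_mono; unfold P; lra). lra. }
  repeat split; try lra.
  - unfold E.
    assert (0 <= v * (1 + p) * (s - q)) by (apply Rmult_le_pos; nra).
    assert (u * (1 + q) * ((1 - k) * s) <= u * (1 + q) * (s - p)).
    { apply Rmult_le_compat_l; nra. }
    assert ((1 - k) * u * s * (1 + s) <= 2 * (u * (1 + q) * ((1 - k) * s))).
    { assert (1 + s <= 2 * (1 + q)) by nra.
      assert (0 <= (1-k) * u * s) by (apply Rmult_le_pos; [apply Rmult_le_pos|]; lra).
      nra. }
    lra.
  - unfold E.
    assert (u * (1 + q) * (s - p) <= u * (1 + s) * s).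
    { apply Rmult_le_compat; nra. }
    assert (v * (1 + p) * (s - q) <= (1 + p) * (u * s)).
    { replace (v * (1 + p) * (s - q)) with ((1+p) * (v * (s - q))) by ring.
      apply Rmult_le_compat_l; lra. }
    assert ((1 + p) * (u * s) <= (1 + s) * (u * s)).
    { apply Rmult_le_compat_r; nra. }
    nra.
  - nra.
Qed.
Definition concl (al C a b : R) : Prop :=
    (a ^ 2 + b ^ 2 <= 1 ->
       Rabs a / Rabs b + Rabs b / Rabs a <= C * Rabs (m al a b) /\
       Rabs (m al a b) <= C * (apow a (1 - al) / Rabs b + apow b (1 - al) / Rabs a)) /\
    (1 <= a ^ 2 + b ^ 2 ->
       apow a (1 - al) / Rabs b + apow b (1 - al) / Rabs a <= C * Rabs (m al a b) /\
       Rabs (m al a b) <= C * (Rabs a / Rabs b + Rabs b / Rabs a)).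

Lemma m_swap al a b : m al b a = m al a b.
Proof. unfold m. rewrite (Rplus_comm b a).
  set (p := apow a al). set (q := apow b al). set (s := apow (a+b) al).
  f_equal; [ring|]. f_equal. ring. Qed.

Lemma apow_opp x p : apow (- x) p = apow x p.
Proof. unfold apow. rewrite Rabs_Ropp. reflexivity. Qed.

Lemma m_neg al a b : m al (-a) (-b) = m al a b.
Proof. unfold m. replace (-a + -b) with (-(a+b)) by ring. rewrite !apow_opp.
  set (p := apow a al). set (q := apow b al). set (s := apow (a+b) al).
  unfold Rdiv.
  match goal with |- _ * / ?D = _ * / ?D' => replace D with (- D') by ring end.
  rewrite Rinv_opp. ring. Qed.

Lemma concl_swap al C a b : concl al C a b -> concl al C b a.
Proof. unfold concl. rewrite m_swap. intros [H1 H2].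
  replace (b^2 + a^2) with (a^2+b^2) by ring. split; intro H.
  - destruct (H1 H) as [X Y]. split; [rewrite Rplus_comm; exact X | rewrite Rplus_comm; exact Y].
  - destruct (H2 H) as [X Y]. split; [rewrite Rplus_comm; exact X | rewrite Rplus_comm; exact Y].
Qed.

Lemma concl_neg al C a b : concl al C a b -> concl al C (-a) (-b).
Proof. unfold concl. rewrite m_neg, !apow_opp, !Rabs_Ropp.
  replace ((-a)^2 + (-b)^2) with (a^2+b^2) by ring. auto. Qed.

Lemma frac_le a b c d : 0 < b -> 0 < d -> a * d <= c * b -> a / b <= c / d.
Proof. intros Hb Hd H. unfold Rdiv.
  apply Rmult_le_reg_r with (b * d). nra.
  replace (a * / b * (b * d)) with (a * d) by (field; lra).
  replace (c * / d * (b * d)) with (c * b) by (field; lra). exact H. Qed.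

Lemma apow_pos x p : 0 < x -> apow x p = Rpower x p.
Proof. intros. unfold apow. rewrite Rabs_pos_eq by lra. reflexivity. Qed.

Lemma apow_neg x p : x < 0 -> apow x p = Rpower (-x) p.
Proof. intros. unfold apow. rewrite Rabs_left by lra. reflexivity. Qed.

Lemma case1 al C u v : 0 < al < 1 -> C * (1 - r al (1/2)) = 64 ->
  0 < u -> u <= v -> concl al C u v.
Proof.
  intros Ha HC Hu Huv.
  destruct (core al u v Ha Hu Huv) as [Hlo [Hhi [Hps [Hqs [Hs2q [Hk1 Hk2]]]]]].
  set (P := u + v) in *. set (p := r al u) in *. set (q := r al v) in *.
  set (s := r al P) in *. set (k := r al (1/2)) in *.
  set (E := u*(1+q)*(s-p) + v*(1+p)*(s-q)) in *.
  set (c := 1 - k) in *.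
  assert (Hv : 0 < v) by lra. assert (HP : 0 < P) by (unfold P; lra).
  assert (Hp : 0 < p) by apply r_pos. assert (Hq : 0 < q) by apply r_pos.
  assert (Hs : 0 < s) by apply r_pos.
  assert (Hc : 0 < c) by (unfold c; lra).
  assert (HE : 0 < 2 * E) by (assert (0 < c * u * s * (1 + s)) by
      (repeat apply Rmult_lt_0_compat; lra); lra).
  assert (HC0 : 0 < C).
  { destruct (Rle_or_lt C 0) as [h|h]; auto. assert (C * c <= 0) by nra. lra. }
  assert (HC2 : 128 <= C).
  { assert (C * c <= C * (1/2)) by (apply Rmult_le_compat_l; unfold c; lra). lra. }
  assert (HN : 0 < P * (1 + p) * (1 + q)) by (repeat apply Rmult_lt_0_compat; lra).
  assert (Hm : Rabs (m al u v) = P * (1 + p) * (1 + q) / (2 * E)).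
  { unfold m. cbv zeta. rewrite !apow_pos by lra. fold P. fold (r al u) (r al v) (r al P).
    fold p q s.
    unfold Rdiv.
    match goal with |- Rabs (_ * / ?D) = _ => replace D with (- (2 * E)) by (unfold E, P; ring) end.
    rewrite Rinv_opp. rewrite Rabs_left.
    - ring.
    - assert (0 < P * (1 + p) * (1 + q) * / (2 * E)).
      { apply Rmult_lt_0_compat; [lra| apply Rinv_0_lt_compat; lra]. }
      nra. }
  assert (Hpu : apow u (1 - al) = u / p) by (rewrite apow_pos, pow1m; auto).
  assert (Hpv : apow v (1 - al) = v / q) by (rewrite apow_pos, pow1m; auto).
  assert (Hrat : u * q <= v * p) by (apply r_ratio; lra).
  unfold concl. rewrite Hm, Hpu, Hpv, !Rabs_pos_eq by lra.
  assert (HA : u / v + v / u = (u * u + v * v) / (u * v)) by (field; lra).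
  assert (HB : u / p / v + v / q / u = (u * u * q + v * v * p) / (p * q * u * v))
    by (field; repeat split; lra).
  assert (HCM : C * (P * (1 + p) * (1 + q) / (2 * E)) = (C * (P * (1 + p) * (1 + q))) / (2 * E))
    by (field; lra).
  rewrite HA, HB, HCM.
  assert (Hpos : 0 < p * q * u * v) by (repeat apply Rmult_lt_0_compat; lra).
  assert (Huv2 : 0 < u * v) by nra.
  split; intro Hreg.
  - assert (Hv1 : v <= 1) by nra.
    assert (Hq1 : q <= 1) by (apply r_le1; lra).
    split.
    + apply frac_le; auto.
      assert (S1 : (u * u + v * v) * (2 * E) <= (2 * v * v) * (4 * u * s * (1 + s))).
      { apply Rmult_le_compat; nra. }
      assert (S2 : (2 * v * v) * (4 * u * s * (1 + s)) <= 32 * u * v * v * (1 + q)).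
      { assert (0 <= u * v * v) by (apply Rmult_le_pos; nra).
        assert (s * (1 + s) <= 4 * (1 + q)) by nra.
        assert (u * v * v * (s * (1 + s)) <= u * v * v * (4 * (1 + q))) by (apply Rmult_le_compat_l; lra).
        nra. }
      assert (S3 : v * (1 + q) <= P * (1 + p) * (1 + q)).
      { unfold P. nra. }
      assert (S4 : 32 * u * v * v * (1 + q) <= C * (P * (1 + p) * (1 + q)) * (u * v)).
      { assert (0 <= u * v) by nra. 
        assert (32 * (u * v) * (v * (1 + q)) <= C * (u * v) * (P * (1 + p) * (1 + q))).
        { apply Rmult_le_compat; nra. }
        nra. }
      lra.
    + rewrite Rmult_div_assoc. apply frac_le; auto.
      assert (S1 : P * (1 + p) * (1 + q) <= 4 * v * (1 + s)).
      { assert (P <= 2 * v) by (unfold P; lra).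
        assert (p <= 1) by (apply r_le1; lra).
        assert ((1 + p) * (1 + q) <= 2 * (1 + s)) by nra. nra. }
      assert (S2 : P * (1 + p) * (1 + q) * (p * q * u * v) <= 4 * v * (1 + s) * (p * s * u * v)).
      { assert (0 <= p * u * v) by (repeat apply Rmult_le_pos; lra).
        apply Rmult_le_compat; try nra. }
      assert (S3 : C * (u * u * q + v * v * p) * (2 * E) >= C * (v * v * p) * (c * u * s * (1 + s))).
      { assert (0 <= C * (v * v * p)) by (repeat apply Rmult_le_pos; nra).
        assert (0 <= u * u * q) by nra.
        apply Rle_ge. apply Rmult_le_compat; try nra. }
      assert (S4 : C * (v * v * p) * (c * u * s * (1 + s)) = 64 * (v * v * p * u * s * (1 + s))).
      { rewrite <- HC. ring. }
      assert (0 <= v * v * p * u * s * (1 + s)) by (repeat apply Rmult_le_pos; lra).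
      nra.
  - assert (Hv1 : 1/2 <= v) by nra.
    assert (Hq1 : k <= q) by (apply r_mono; lra).
    split.
    + apply frac_le; auto.
      assert (S0 : u * u * q + v * v * p <= 2 * v * v * p).
      { assert (u * (u * q) <= v * (v * p)) by (apply Rmult_le_compat; nra). nra. }
      assert (S1 : (u * u * q + v * v * p) * (2 * E) <= (2 * v * v * p) * (4 * u * s * (1 + s))).
      { apply Rmult_le_compat; nra. }
      assert (S2 : s * (1 + s) <= 4 * q * (1 + q)) by nra.
      assert (S3 : (2 * v * v * p) * (4 * u * s * (1 + s)) <= 32 * (v * v * p * u) * (q * (1 + q))).
      { assert (0 <= v * v * p * u) by (repeat apply Rmult_le_pos; nra). nra. }
      assert (S4 : v * (1 + q) <= P * (1 + p) * (1 + q)) by (unfold P; nra).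
      assert (S5 : 32 * (v * v * p * u) * (q * (1 + q)) <= C * (P * (1 + p) * (1 + q)) * (p * q * u * v)).
      { assert (0 <= v * p * u * q) by (repeat apply Rmult_le_pos; nra).
        assert (32 * (v * p * u * q) * (v * (1 + q)) <= C * (v * p * u * q) * (P * (1 + p) * (1 + q))).
        { apply Rmult_le_compat; nra. }
        nra. }
      lra.
    + rewrite Rmult_div_assoc. apply frac_le; auto.
      assert (S1 : P * (1 + p) * (1 + q) <= 6 * v * s * (1 + s)).
      { assert (P <= 2 * v) by (unfold P; lra).
        assert ((1 + p) * (1 + q) <= 3 * s * (1 + s)) by nra. nra. }
      assert (S2 : P * (1 + p) * (1 + q) * (u * v) <= 6 * v * s * (1 + s) * (u * v)).
      { apply Rmult_le_compat_r; nra. }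
      assert (S3 : C * (u * u + v * v) * (2 * E) >= C * (v * v) * (c * u * s * (1 + s))).
      { assert (0 <= C * (v * v)) by (repeat apply Rmult_le_pos; nra).
        apply Rle_ge. apply Rmult_le_compat; try nra. }
      assert (S4 : C * (v * v) * (c * u * s * (1 + s)) = 64 * (v * v * u * s * (1 + s))).
      { rewrite <- HC. ring. }
      assert (0 <= v * v * u * s * (1 + s)) by (repeat apply Rmult_le_pos; lra).
      nra.
Qed.

Ltac setup al C u v Ha HC Hu Huv :=
  destruct (core al u v Ha Hu Huv) as [Hlo [Hhi [Hps [Hqs [Hs2q [Hk1 Hk2]]]]]];
  set (P := u + v) in *; set (p := r al u) in *; set (q := r al v) in *;
  set (s := r al P) in *; set (k := r al (1/2)) in *;
  set (E := u*(1+q)*(s-p) + v*(1+p)*(s-q)) in *;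
  set (c := 1 - k) in *;
  assert (Hv : 0 < v) by lra; assert (HP : 0 < P) by (unfold P; lra);
  assert (Hp : 0 < p) by apply r_pos; assert (Hq : 0 < q) by apply r_pos;
  assert (Hs : 0 < s) by apply r_pos;
  assert (Hc : 0 < c) by (unfold c; lra);
  assert (HE : 0 < 2 * E) by (assert (0 < c * u * s * (1 + s)) by
      (repeat apply Rmult_lt_0_compat; lra); lra);
  assert (HC0 : 0 < C) by
  (destruct (Rle_or_lt C 0) as [h|h]; auto; assert (C * c <= 0) by nra; lra);
  assert (HC2 : 128 <= C) by
  (assert (C * c <= C * (1/2)) by (apply Rmult_le_compat_l; unfold c; lra); lra).

Lemma case2 al C u v : 0 < al < 1 -> C * (1 - r al (1/2)) = 64 ->
  0 < u -> u <= v -> concl al C (u + v) (- v).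
Proof.
  intros Ha HC Hu Huv. setup al C u v Ha HC Hu Huv.
  assert (HN : 0 < u * (1 + s) * (1 + q)) by (repeat apply Rmult_lt_0_compat; lra).
  assert (Hm : Rabs (m al P (- v)) = u * (1 + s) * (1 + q) / (2 * E)).
  { unfold m. cbv zeta. replace (P + - v) with u by (unfold P; ring).
    rewrite apow_opp, !apow_pos by lra. fold (r al u) (r al v) (r al P).
    fold p q s.
    match goal with |- Rabs (_ / ?D) = _ => replace D with (2 * E) by (unfold E, P; ring) end.
    rewrite Rabs_pos_eq; [reflexivity|].
    left. apply Rdiv_lt_0_compat; lra. }
  assert (Hpu : apow P (1 - al) = P / s) by (rewrite apow_pos, pow1m; auto).
  assert (Hpv : apow (- v) (1 - al) = v / q) by (rewrite apow_opp, apow_pos, pow1m; auto).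
  unfold concl. rewrite Hm, Hpu, Hpv, Rabs_Ropp, !Rabs_pos_eq by lra.
  assert (HA : P / v + v / P = (P * P + v * v) / (v * P)) by (field; lra).
  assert (HB : P / s / v + v / q / P = (P * P * q + v * v * s) / (s * q * v * P))
    by (field; repeat split; lra).
  rewrite HA, HB, !Rmult_div_assoc.
  assert (Hpos : 0 < s * q * v * P) by (repeat apply Rmult_lt_0_compat; lra).
  assert (Hvp : 0 < v * P) by nra.
  assert (HPv : v <= P) by (unfold P; lra).
  assert (HP2 : P <= 2 * v) by (unfold P; lra).
  replace ((- v) ^ 2) with (v ^ 2) by ring.
  split; intro Hreg.
  - assert (HP1 : P <= 1) by nra.
    assert (Hs1 : s <= 1) by (apply r_le1; lra).
    split; apply frac_le; auto.
    + assert (S0 : P * P + v * v <= 3 * (v * P)) by nra.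
      assert (S1 : (P * P + v * v) * (2 * E) <= 3 * (v * P) * (4 * u * s * (1 + s))).
      { apply Rmult_le_compat; [nra|lra|lra|lra]. }
      assert (S2 : 3 * (v * P) * (4 * u * s * (1 + s)) <= 12 * (v * P * u * (1 + s))).
      { assert (0 <= v * P * u * (1 + s)) by (repeat apply Rmult_le_pos; lra). nra. }
      assert (S3 : 12 * (v * P * u * (1 + s)) <= C * (u * (1 + s) * (1 + q)) * (v * P)).
      { assert (0 <= v * P * u * (1 + s)) by (repeat apply Rmult_le_pos; lra).
        assert (12 * (v * P * u * (1 + s)) * 1 <= C * (v * P * u * (1 + s)) * (1 + q))
          by (apply Rmult_le_compat; nra).
        nra. }
      lra.
    + assert (S1 : u * (1 + s) * (1 + q) * (s * q * v * P) <= 2 * (u * (1 + s) * s * q * P * P)).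
      { assert (0 <= u * (1 + s) * s * q) by (repeat apply Rmult_le_pos; lra).
        assert (u * (1 + s) * s * q * ((1 + q) * v * P) <= u * (1 + s) * s * q * (2 * P * P))
          by (apply Rmult_le_compat_l; nra).
        nra. }
      assert (S3 : C * (P * P * q + v * v * s) * (2 * E) >= C * (P * P * q) * (c * u * s * (1 + s))).
      { assert (0 <= C * (P * P * q)) by (repeat apply Rmult_le_pos; nra).
        assert (0 <= v * v * s) by nra.
        apply Rle_ge. apply Rmult_le_compat; try nra. }
      assert (S4 : C * (P * P * q) * (c * u * s * (1 + s)) = 64 * (u * (1 + s) * s * q * P * P)).
      { rewrite <- HC. ring. }
      assert (0 <= u * (1 + s) * s * q * P * P) by (repeat apply Rmult_le_pos; lra).
      nra.
  - assert (HP1 : 1/2 <= P) by nra.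
    assert (Hs1 : k <= s) by (apply r_mono; lra).
    split; apply frac_le; auto.
    + assert (S0 : P * P * q + v * v * s <= 4 * (q * v * P)).
      { assert (P * P * q <= 2 * v * P * q) by (apply Rmult_le_compat_r; nra).
        assert (v * v * s <= v * P * (2 * q)) by (apply Rmult_le_compat; nra).
        nra. }
      assert (S1 : (P * P * q + v * v * s) * (2 * E) <= 4 * (q * v * P) * (4 * u * s * (1 + s))).
      { apply Rmult_le_compat; [nra|lra|lra|lra]. }
      assert (S3 : 16 * (q * v * P * u * s * (1 + s)) <= C * (u * (1 + s) * (1 + q)) * (s * q * v * P)).
      { assert (0 <= q * v * P * u * s * (1 + s)) by (repeat apply Rmult_le_pos; lra).
        assert (16 * (q * v * P * u * s * (1 + s)) * 1 <= C * (q * v * P * u * s * (1 + s)) * (1 + q))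
          by (apply Rmult_le_compat; nra).
        nra. }
      nra.
    + assert (S1 : u * (1 + s) * (1 + q) * (v * P) <= 3 * (u * (1 + s) * s * P * P)).
      { assert (0 <= u * (1 + s)) by nra.
        assert ((1 + q) * (v * P) <= 3 * s * (P * P)) by (apply Rmult_le_compat; nra).
        nra. }
      assert (S3 : C * (P * P + v * v) * (2 * E) >= C * (P * P) * (c * u * s * (1 + s))).
      { assert (0 <= C * (P * P)) by (repeat apply Rmult_le_pos; nra).
        apply Rle_ge. apply Rmult_le_compat; try nra. }
      assert (S4 : C * (P * P) * (c * u * s * (1 + s)) = 64 * (u * (1 + s) * s * P * P)).
      { rewrite <- HC. ring. }
      assert (0 <= u * (1 + s) * s * P * P) by (repeat apply Rmult_le_pos; lra).
      nra.
Qed.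

Lemma case3 al C u v : 0 < al < 1 -> C * (1 - r al (1/2)) = 64 ->
  0 < u -> u <= v -> concl al C (u + v) (- u).
Proof.
  intros Ha HC Hu Huv. setup al C u v Ha HC Hu Huv.
  assert (HN : 0 < v * (1 + s) * (1 + p)) by (repeat apply Rmult_lt_0_compat; lra).
  assert (Hm : Rabs (m al P (- u)) = v * (1 + s) * (1 + p) / (2 * E)).
  { unfold m. cbv zeta. replace (P + - u) with v by (unfold P; ring).
    rewrite apow_opp, !apow_pos by lra. fold (r al u) (r al v) (r al P).
    fold p q s.
    match goal with |- Rabs (_ / ?D) = _ => replace D with (2 * E) by (unfold E, P; ring) end.
    rewrite Rabs_pos_eq; [reflexivity|].
    left. apply Rdiv_lt_0_compat; lra. }
  assert (Hpu : apow P (1 - al) = P / s) by (rewrite apow_pos, pow1m; auto).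
  assert (Hpv : apow (- u) (1 - al) = u / p) by (rewrite apow_opp, apow_pos, pow1m; auto).
  unfold concl. rewrite Hm, Hpu, Hpv, Rabs_Ropp, !Rabs_pos_eq by lra.
  assert (HA : P / u + u / P = (P * P + u * u) / (u * P)) by (field; lra).
  assert (HB : P / s / u + u / p / P = (P * P * p + u * u * s) / (s * p * u * P))
    by (field; repeat split; lra).
  rewrite HA, HB, !Rmult_div_assoc.
  assert (Hpos : 0 < s * p * u * P) by (repeat apply Rmult_lt_0_compat; lra).
  assert (Hup : 0 < u * P) by nra.
  assert (HPv : v <= P) by (unfold P; lra).
  assert (HP2 : P <= 2 * v) by (unfold P; lra).
  assert (HuP : u <= P) by (unfold P; lra).
  assert (Hrat : u * s <= P * p) by (apply r_ratio; lra).
  replace ((- u) ^ 2) with (u ^ 2) by ring.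
  split; intro Hreg.
  - assert (HP1 : P <= 1) by nra.
    assert (Hs1 : s <= 1) by (apply r_le1; lra).
    split; apply frac_le; auto.
    + assert (S0 : P * P + u * u <= 2 * (P * P)) by nra.
      assert (S1 : (P * P + u * u) * (2 * E) <= 2 * (P * P) * (4 * u * s * (1 + s))).
      { apply Rmult_le_compat; [nra|lra|lra|lra]. }
      assert (S2 : 2 * (P * P) * (4 * u * s * (1 + s)) <= 8 * (P * P * u * (1 + s))).
      { assert (0 <= P * P * u * (1 + s)) by (repeat apply Rmult_le_pos; lra). nra. }
      assert (S3 : 8 * (P * P * u * (1 + s)) <= C * (v * (1 + s) * (1 + p)) * (u * P)).
      { assert (0 <= P * u * (1 + s)) by (repeat apply Rmult_le_pos; lra).
        assert (8 * (P * u * (1 + s)) * P <= 16 * (P * u * (1 + s)) * v) by nra.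
        assert (16 * (P * u * (1 + s)) * v <= C * (P * u * (1 + s)) * (v * (1 + p)))
          by (apply Rmult_le_compat; nra).
        nra. }
      lra.
    + assert (S1 : v * (1 + s) * (1 + p) * (s * p * u * P) <= 2 * (u * (1 + s) * s * p * P * P)).
      { assert (0 <= u * (1 + s) * s * p) by (repeat apply Rmult_le_pos; lra).
        assert (p <= 1) by (apply r_le1; lra).
        assert (u * (1 + s) * s * p * (v * (1 + p) * P) <= u * (1 + s) * s * p * (2 * P * P))
          by (apply Rmult_le_compat_l; assert (v * (1 + p) <= 2 * P) by nra; nra).
        nra. }
      assert (S3 : C * (P * P * p + u * u * s) * (2 * E) >= C * (P * P * p) * (c * u * s * (1 + s))).
      { assert (0 <= C * (P * P * p)) by (repeat apply Rmult_le_pos; nra).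
        assert (0 <= u * u * s) by nra.
        apply Rle_ge. apply Rmult_le_compat; try nra. }
      assert (S4 : C * (P * P * p) * (c * u * s * (1 + s)) = 64 * (u * (1 + s) * s * p * P * P)).
      { rewrite <- HC. ring. }
      assert (0 <= u * (1 + s) * s * p * P * P) by (repeat apply Rmult_le_pos; lra).
      nra.
  - assert (HP1 : 1/2 <= P) by nra.
    assert (Hs1 : k <= s) by (apply r_mono; lra).
    split; apply frac_le; auto.
    + assert (S0 : P * P * p + u * u * s <= 2 * (P * P * p)).
      { assert (u * (u * s) <= P * (P * p)) by (apply Rmult_le_compat; nra). nra. }
      assert (S1 : (P * P * p + u * u * s) * (2 * E) <= 2 * (P * P * p) * (4 * u * s * (1 + s))).
      { apply Rmult_le_compat; [nra|lra|lra|lra]. }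
      assert (S3 : 16 * (P * P * p * u * s * (1 + s)) <= C * (v * (1 + s) * (1 + p)) * (s * p * u * P)).
      { assert (0 <= P * p * u * s * (1 + s)) by (repeat apply Rmult_le_pos; lra).
        assert (16 * (P * p * u * s * (1 + s)) * P <= 32 * (P * p * u * s * (1 + s)) * v) by nra.
        assert (32 * (P * p * u * s * (1 + s)) * v <= C * (P * p * u * s * (1 + s)) * (v * (1 + p)))
          by (apply Rmult_le_compat; nra).
        nra. }
      assert (0 <= P * P * p * u * s * (1 + s)) by (repeat apply Rmult_le_pos; lra).
      nra.
    + assert (S1 : v * (1 + s) * (1 + p) * (u * P) <= 3 * (u * (1 + s) * s * P * P)).
      { assert (0 <= u * (1 + s)) by nra.
        assert ((1 + p) * (v * P) <= 3 * s * (P * P)) by (apply Rmult_le_compat; nra).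
        nra. }
      assert (S3 : C * (P * P + u * u) * (2 * E) >= C * (P * P) * (c * u * s * (1 + s))).
      { assert (0 <= C * (P * P)) by (repeat apply Rmult_le_pos; nra).
        apply Rle_ge. apply Rmult_le_compat; try nra. }
      assert (S4 : C * (P * P) * (c * u * s * (1 + s)) = 64 * (u * (1 + s) * s * P * P)).
      { rewrite <- HC. ring. }
      assert (0 <= u * (1 + s) * s * P * P) by (repeat apply Rmult_le_pos; lra).
      nra.
Qed.

Lemma mixed al C a b : 0 < al < 1 -> C * (1 - r al (1/2)) = 64 ->
  0 < a -> b < 0 -> 0 < a + b -> concl al C a b.
Proof.
  intros Ha HC H1 H2 H3.
  destruct (Rle_or_lt (a + b) (- b)) as [h|h].
  - pose proof (case2 al C (a + b) (- b) Ha HC H3 h) as X.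
    replace (a + b + - b) with a in X by ring. rewrite Ropp_involutive in X. exact X.
  - assert (h' : - b <= a + b) by lra. assert (0 < - b) by lra.
    pose proof (case3 al C (- b) (a + b) Ha HC H h') as X.
    replace (- b + (a + b)) with a in X by ring. rewrite Ropp_involutive in X. exact X.
Qed.

Lemma mixed_all al C a b : 0 < al < 1 -> C * (1 - r al (1/2)) = 64 ->
  0 < a -> b < 0 -> a + b <> 0 -> concl al C a b.
Proof.
  intros Ha HC H1 H2 H3.
  destruct (Rlt_or_le 0 (a + b)) as [h|h].
  - apply mixed; auto.
  - assert (X : concl al C (- b) (- a)) by (apply mixed; auto; lra).
    apply concl_swap in X. apply concl_neg in X. rewrite !Ropp_involutive in X. exact X.
Qed.

Lemma all_cases al C a b : 0 < al < 1 -> C * (1 - r al (1/2)) = 64 ->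
  a <> 0 -> b <> 0 -> a + b <> 0 -> concl al C a b.
Proof.
  intros Ha HC H1 H2 H3.
  destruct (Rlt_or_le 0 a) as [ha|ha]; destruct (Rlt_or_le 0 b) as [hb|hb].
  - destruct (Rle_or_lt a b) as [h|h].
    + apply case1; auto.
    + apply concl_swap. apply case1; auto; lra.
  - apply mixed_all; auto; lra.
  - apply concl_swap. apply mixed_all; auto; lra.
  - assert (X : concl al C (- a) (- b)).
    { destruct (Rle_or_lt (- a) (- b)) as [h|h].
      + apply case1; auto; lra.
      + apply concl_swap. apply case1; auto; lra. }
    apply concl_neg in X. rewrite !Ropp_involutive in X. exact X.
Qed.

Theorem proposition2p1 (al : R) (Hal0 : 0 < al) (Hal1 : al < 1) :
  exists C : R, 0 < C /\
  forall a b : R, a <> 0 -> b <> 0 -> a + b <> 0 ->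
    (a ^ 2 + b ^ 2 <= 1 ->
       Rabs a / Rabs b + Rabs b / Rabs a <= C * Rabs (m al a b) /\
       Rabs (m al a b) <= C * (apow a (1 - al) / Rabs b + apow b (1 - al) / Rabs a)) /\
    (1 <= a ^ 2 + b ^ 2 ->
       apow a (1 - al) / Rabs b + apow b (1 - al) / Rabs a <= C * Rabs (m al a b) /\
       Rabs (m al a b) <= C * (Rabs a / Rabs b + Rabs b / Rabs a)).
Proof.
  assert (Hk : r al (1/2) < 1) by (apply r_half_lt1; lra).
  exists (64 / (1 - r al (1/2))). split.
  - apply Rdiv_lt_0_compat; lra.
  - intros a b H1 H2 H3. apply (all_cases al); auto.
    field. lra.
Qed.
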